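(* Let $k$ be a field of characteristic not $2$, $\lambda\in k^\times$, $(V,\circ)$ a commutative associative algebra over $k$ with unit $e$, $\Theta:V\times V\to k$ an antisymmetric bilinear form, and $A_\Theta$ the algebra generated by $V$ with relations $vw-wv=\lambda\Theta(v,w)$ for $v,w\in V$ (so $A_\Theta=k[x^1,\dots,x^n]$ when $\Theta=0$). If $B:V\times V\to A_\Theta$ is bilinear and satisfies $B(v\circ w,z)+B(v,w\circ z)=\lambda^{-1}[B(v,z),w]$ for all $v,w,z\in V$, then $B=0$. Consequently the associated calculus $[\mathrm dv,w]=\lambda\,\mathrm d(v\circ w)$ admits no nonzero bimodule inner product of the form $(\mathrm dv,\mathrm dw)=B(v,w)$.
   Context: Here $[a,w]=aw-wa$ in $A_\Theta$. A bimodule inner product on $\Omega^1$ is a bimodule map $(\ ,\ ):\Omega^1\otimes_A\Omega^1\to A_\Theta$; for inner products of the form $(\mathrm dv,\mathrm dw)=B(v,w)$ the bimodule property is equivalent to the displayed identity. $A_\Theta$ is filtered by polynomial degree in elements of $V$. *)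

(* Defs.v *)
From HB Require Import structures.
From mathcomp Require Import all_boot all_order all_algebra.
Set Implicit Arguments. Unset Strict Implicit. Unset Printing Implicit Defensive.
Import Order.TTheory GRing.Theory Num.Theory.
Local Open Scope ring_scope.

Definition comm_br (A : nzRingType) (a b : A) : A := a * b - b * a.

Definition bilinear_map (k : fieldType) (V W : lmodType k) (f : V -> V -> W) :=
  (forall (a : k) (u v w : V), f (a *: u + v) w = a *: f u w + f v w) /\
  (forall (a : k) (u v w : V), f u (a *: v + w) = a *: f u v + f u w).

Definition antisym_form (k : fieldType) (V : lmodType k) (Th : V -> V -> k) :=
  (forall (a : k) (u v w : V), Th (a *: u + v) w = a * Th u w + Th v w) /\
  (forall (a : k) (u v w : V), Th u (a *: v + w) = a * Th u v + Th u w) /\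
  (forall u v : V, Th u v = - Th v u).

Definition theta_rel (k : fieldType) (V : lmodType k) (lam : k)
    (Th : V -> V -> k) (C : algType k) (f : V -> C) :=
  forall v w : V, comm_br (f v) (f w) = (lam * Th v w)%:A.

(* (A, iota) is "the algebra generated by V with relations
   v w - w v = lam Theta(v,w)": iota is linear, satisfies the relations, and
   (A, iota) is universal among such data (free algebra modulo the relations). *)
Definition is_A_Theta (k : fieldType) (V : lmodType k) (lam : k)
    (Th : V -> V -> k) (A : algType k) (iota : {linear V -> A}) :=
  theta_rel lam Th iota /\
  forall (C : algType k) (f : {linear V -> C}),
    theta_rel lam Th f ->
    exists g : {lrmorphism A -> C},
      (forall v, g (iota v) = f v) /\
      (forall h : {lrmorphism A -> C}, (forall v, h (iota v) = f v) -> h =1 g).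

(* Main.v *)
Require Import Defs.
From HB Require Import structures.
From mathcomp Require Import all_boot all_order all_algebra.
From Stdlib Require Import ClassicalEpsilon.
From mathcomp Require Import zify.
Import GRing.Theory.
Local Open Scope ring_scope.

Section Nil.
Variables (k : fieldType) (A : algType k) (c : A).
Definition Dc (x : A) := c * x - x * c.
Definition Pn (x : A) := exists n, iter n Dc x = 0.
Definition Nb : pred A := fun x => if excluded_middle_informative (Pn x) then true else false.
Lemma NbP x : reflect (Pn x) (Nb x).
Proof. by rewrite /Nb; case: excluded_middle_informative => h; constructor. Qed.

Lemma iter_Dc0 n : iter n Dc 0 = 0.
Proof. by elim: n => //= n ->; rewrite /Dc mulr0 mul0r subrr. Qed.

Lemma iter_Dc_lin n a x y : iter n Dc (a *: x + y) = a *: iter n Dc x + iter n Dc y.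
Proof.
elim: n => //= n ->; rewrite /Dc.
by rewrite mulrDr mulrDl -scalerAl -scalerAr opprD addrACA scalerBr.
Qed.

Lemma iter_Dc_add n x y : iter n Dc (x + y) = iter n Dc x + iter n Dc y.
Proof. by rewrite -{1}[x]scale1r iter_Dc_lin scale1r. Qed.

Lemma iter_mono m n x : (m <= n)%N -> iter m Dc x = 0 -> iter n Dc x = 0.
Proof.
move=> /subnK <- h; rewrite iterD h; exact: iter_Dc0.
Qed.

Lemma iter_mul n : forall p q x y, (p + q = n)%N -> iter p Dc x = 0 -> iter q Dc y = 0 ->
  iter n Dc (x * y) = 0.
Proof.
elim: n => [|n IH] p q x y.
  by case: p => // _ /= ->; rewrite mul0r.
case: p => [|p].
  by move=> _ hx _; rewrite /= in hx; rewrite hx mul0r iter_Dc0.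
case: q => [|q].
  by move=> _ _ hy; rewrite /= in hy; rewrite hy mulr0 iter_Dc0.
move=> hpq hx hy; rewrite iterSr.
have -> : Dc (x * y) = Dc x * y + x * Dc y.
  rewrite /Dc mulrBl mulrBr !mulrA.
  by rewrite addrA subrK.
rewrite iter_Dc_add.
rewrite (IH p q.+1) ?(IH p.+1 q) ?addr0 //.
- by move: hpq; lia.
- by move: hy; rewrite iterSr.
- by move: hpq; lia.
- by move: hx; rewrite iterSr.
Qed.

Lemma Nb_closed : subalg_closed Nb.
Proof.
split.
- apply/NbP; exists 1%N; by rewrite /= /Dc mulr1 mul1r subrr.
- move=> a u v /NbP [m hm] /NbP [n hn]; apply/NbP; exists (maxn m n).
  rewrite iter_Dc_lin (iter_mono _ _ _ (leq_maxl m n) hm) (iter_mono _ _ _ (leq_maxr m n) hn).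
  by rewrite scaler0 addr0.
- move=> u v /NbP [m hm] /NbP [n hn]; apply/NbP; exists (m + n)%N.
  exact: (iter_mul _ _ _ _ _ erefl hm hn).
Qed.

HB.instance Definition _ := GRing.isSubalgClosed.Build k A Nb (GRing.subalg_closed_semi Nb_closed).

Record Nt := MkNt { ntval : A; ntP : ntval \in Nb }.
HB.instance Definition _ := [isSub for ntval].
HB.instance Definition _ := [Choice of Nt by <:].
HB.instance Definition _ := [SubChoice_isSubAlgebra of Nt by <:].

Section Comp.
Variable g : {lrmorphism A -> Nt}.
Definition vg : A -> A := (val \o g)%FUN.
HB.instance Definition _ := GRing.RMorphism.on vg.
HB.instance Definition _ := GRing.Linear.on vg.
End Comp.
End Nil.

Arguments Dc {k A} c x.
Arguments iter_Dc_lin {k A} c n a x y.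
Arguments NbP {k A c x}.

Section Emb.
Variables (k : fieldType) (V : lmodType k) (A : algType k) (c : A).
Variable (iota : {linear V -> A}).
Hypothesis hin : forall v, iota v \in Nb k A c.
Definition fN (v : V) : Nt k A c := @MkNt k A c (iota v) (hin v).
Lemma fN_lin : linear fN.
Proof. by move=> a u v; apply: val_inj; rewrite linearP /= linearP. Qed.
HB.instance Definition _ := GRing.isLinear.Build k V (Nt k A c) _ fN fN_lin.
End Emb.

Lemma all_nil (k : fieldType) (V : lmodType k) (lam : k) (Th : V -> V -> k)
  (A : algType k) (iota : {linear V -> A}) (hA : is_A_Theta lam Th iota) (c : A)
  (hin : forall v, iota v \in Nb k A c) : forall a, a \in Nb k A c.
Proof.
have hrelN : theta_rel lam Th (fN k V A c iota hin).
  move=> v w; apply: val_inj.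
  by rewrite /comm_br rmorphB !rmorphM /=; exact: hA.1.
case: (hA.2 _ (fN k V A c iota hin) hrelN) => g [hg _].
case: (hA.2 A iota hA.1) => g0 [_ huniq].
have h1 := huniq idfun (fun v => erefl).
have h2 : forall v, vg k A c g (iota v) = iota v.
  by move=> v; rewrite /vg /= hg.
have h2' := huniq (vg k A c g) h2.
move=> a; have -> : a = vg k A c g a by rewrite h2' -h1.
exact: valP.
Qed.

Theorem mainTheorem12 (k : fieldType) (hk : 2%N \notin [pchar k])
  (lam : k) (hlam : lam != 0)
  (V : comAlgType k) (Th : V -> V -> k) (hTh : antisym_form Th)
  (A : algType k) (iota : {linear V -> A}) (hA : is_A_Theta lam Th iota)
  (B : V -> V -> A) (hB : bilinear_map B)
  (hrel : forall v w z : V,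
      B (v * w) z + B v (w * z) = lam^-1 *: comm_br (B v z) (iota w)) :
  forall v w : V, B v w = 0.
Proof.
pose c := iota 1.
have hin : forall v, iota v \in Nb k A c.
  move=> v; apply/NbP; exists 2%N => /=.
  have -> : Dc (iota 1) (iota v) = (lam * Th 1 v)%:A by exact: hA.1.
  by rewrite /Dc mulr_algr mulr_algl subrr.
have hall := @all_nil k V lam Th A iota hA c hin.
move=> v z; set X := B v z.
have h2 : (2%:R : k) != 0.
  by move: hk; rewrite inE /=.
pose mu := - (lam *+ 2).
have hmu : mu != 0.
  by rewrite /mu oppr_eq0 -mulr_natr mulf_neq0.
have hD : Dc (iota 1) X = mu *: X.
  have := hrel v 1 z; rewrite mulr1 mul1r -/X /comm_br => h.
  have : lam *: (X + X) = X * c - c * X.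
    by rewrite h scalerA mulfV // scale1r.
  rewrite /Dc /mu => e; rewrite -opprB -e -scaleNr mulr2n scaleNr.
  by rewrite scaleNr scalerDl scalerDr.
have hit : forall n, iter n (Dc (iota 1)) X = mu ^+ n *: X.
  elim=> [|n IH] /=; first by rewrite scale1r.
  rewrite IH /Dc -scalerAl -scalerAr -scalerBr -/(Dc (iota 1) X) hD.
  by rewrite scalerA exprS mulrC.
case/NbP: (hall X) => n; rewrite hit => /eqP.
rewrite scaler_eq0 expf_eq0 (negbTE hmu) andbF /=.
by move/eqP.
Qed.
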